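(* Let $p$ be an odd prime. If $D$ is an injective $\mathbb{Z}_{(p)}$-module, then $UD=\mathrm{Hom}^{\mathrm{cts}}_{\mathbb{Z}_{(p)}}(A,D)$ is an injective object of the category of discrete $A$-modules. Hence the category of discrete $A$-modules has enough injectives.
   Context: $A$ is the ring of degree zero stable operations in $p$-local complex $K$-theory. Fix $q$ primitive mod $p^2$, $\Psi^q\in A$ the Adams operation, $q_i=q^{(-1)^i\lfloor i/2\rfloor}$, $\Theta_n(X)=\prod_{i=1}^n(X-q_i)$, $\Phi_n=\Theta_n(\Psi^q)$; every element of $A$ is uniquely a convergent sum $\sum_{n\ge0}a_n\Phi_n$ with $a_n\in\mathbb{Z}_{(p)}$, and $A_m=\{\sum_{n\ge m}a_n\Phi_n\}$. An $A$-module $M$ is discrete if each $x\in M$ satisfies $A_nx=0$ for some $n$; discrete $A$-modules form a full subcategory of $A$-modules. $\mathrm{Hom}^{\mathrm{cts}}_{\mathbb{Z}_{(p)}}(A,L)$ is the set of $\mathbb{Z}_{(p)}$-homomorphisms $A\to L$ whose kernel contains some $A_n$, an $A$-module via $(af)(t)=f(ta)$. *)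

(* Defs.v *)
From HB Require Import structures.
From mathcomp Require Import all_boot all_order all_algebra.
From mathcomp Require Import boolp classical_sets functions.
Set Implicit Arguments. Unset Strict Implicit. Unset Printing Implicit Defensive.
Import Order.TTheory GRing.Theory Num.Theory.
Local Open Scope ring_scope.

(* Z_(p) : the p-local integers, as the subring of rat of fractions whose   *)
(* denominator can be chosen prime to p.                                    *)

Definition plocal (p : nat) : {pred rat} :=
  fun x => `[< exists n : nat, coprime n p /\ x * n%:R \is a Num.int >].

Lemma plocal_subring (p : nat) : subring_closed (plocal p).
Proof.
split.
- apply/asboolP; exists 1%N; split; first exact: coprime1n.
  by rewrite mul1r.
- move=> x y /asboolP [m [cm xm]] /asboolP [n [cn yn]].
  apply/asboolP; exists (m * n)%N; split; first by rewrite coprimeMl cm cn.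
  rewrite natrM mulrBl.
  have -> : x * (m%:R * n%:R) = (x * m%:R) * n%:R by rewrite mulrA.
  have -> : y * (m%:R * n%:R) = (y * n%:R) * m%:R by rewrite (mulrC m%:R) mulrA.
  by rewrite rpredB // rpredM // rpred_nat.
- move=> x y /asboolP [m [cm xm]] /asboolP [n [cn yn]].
  apply/asboolP; exists (m * n)%N; split; first by rewrite coprimeMl cm cn.
  rewrite natrM.
  have -> : x * y * (m%:R * n%:R) = (x * m%:R) * (y * n%:R).
    by rewrite -!mulrA; congr (_ * _); rewrite mulrCA.
  by rewrite rpredM.
Qed.

HB.instance Definition _ (p : nat) :=
  GRing.isSubringClosed.Build rat (plocal p) (plocal_subring p).

Record Zloc (p : nat) := MkZloc { zval : rat; _ : zval \in plocal p }.
HB.instance Definition _ p := [isSub for @zval p].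
HB.instance Definition _ p := [Choice of Zloc p by <:].
HB.instance Definition _ p := [SubChoice_isSubComNzRing of Zloc p by <:].


(* The nodes q_i = q^((-1)^i * floor(i/2)), i >= 1 (so q_1 = 1, q_2 = q,    *)
(* q_3 = q^-1, q_4 = q^2, ...), as rationals.                               *)

Definition qexp (i : nat) : int := if odd i then - (i./2)%:Z else (i./2)%:Z.
Definition qnode (q : int) (i : nat) : rat := (q%:~R : rat) ^ (qexp i).

Definition Theta (q : int) (n : nat) : {poly rat} :=
  \prod_(1 <= i < n.+1) ('X - (qnode q i)%:P).

Definition primitive_mod (q : int) (m : nat) : Prop :=
  forall k : nat, (0 < k)%N ->
    ((q ^+ k == 1 %[mod m%:Z])%Z <-> (totient m %| k)%N).

(* The ring A.  By the context, A = { sum_n a_n Phi_n : a_n in Z_(p) } with *)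
(* Phi_n = Theta_n(Psi^q), i.e. A is the completion lim_n Z_(p)[X]/Theta_n.*)
(* We realise A faithfully (as a topological ring) through the injective   *)
(* ring map a |-> (value of a at Psi^q = q_{k+1})_{k : nat}, i.e.           *)
(*    sum_n a_n Phi_n  |->  (k |-> sum_{n <= k} a_n Theta_n(q_{k+1})).      *)
(* Its image is the set of f : nat -> Z_(p) that, on the first n nodes, are *)
(* interpolated by a polynomial with Z_(p) coefficients, for every n.       *)
(* Under this identification Psi^q is k |-> q_{k+1}, Phi_n is               *)
(* k |-> Theta_n(q_{k+1}), and A_m = { sum_{n>=m} a_n Phi_n } is exactly    *)
(* the set of f in A vanishing on the first m nodes.         *)

Definition Apred (p : nat) (q : int) : {pred (nat -> Zloc p)} :=
  fun f => `[< forall n : nat, exists P : {poly Zloc p},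
      forall k : nat, (k < n)%N ->
        (map_poly (val : Zloc p -> rat) P).[qnode q k.+1] = val (f k) >].

Arguments Apred : clear implicits.

Lemma Apred_subring (p : nat) (q : int) : subring_closed (Apred p q).
Proof.
split.
- apply/asboolP => n; exists 1 => k _.
  rewrite rmorph1 hornerC.
  have -> : (1 : nat -> Zloc p) k = 1 by [].
  by rewrite rmorph1.
- move=> f g /asboolP Hf /asboolP Hg; apply/asboolP => n.
  have [P HP] := Hf n; have [Q HQ] := Hg n.
  exists (P - Q) => k kn.
  have -> : (f - g) k = f k - g k by [].
  by rewrite !rmorphB hornerD hornerN HP // HQ.
- move=> f g /asboolP Hf /asboolP Hg; apply/asboolP => n.
  have [P HP] := Hf n; have [Q HQ] := Hg n.
  exists (P * Q) => k kn.
  have -> : (f * g) k = f k * g k by [].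
  by rewrite !rmorphM hornerM HP // HQ.
Qed.

HB.instance Definition _ (p : nat) (q : int) :=
  GRing.isSubringClosed.Build (nat -> Zloc p) (Apred p q) (Apred_subring p q).

Record Aop (p : nat) (q : int) := MkAop { aval : nat -> Zloc p; _ : aval \in Apred p q }.
HB.instance Definition _ p q := [isSub for @aval p q].
HB.instance Definition _ p q := [Choice of Aop p q by <:].
HB.instance Definition _ p q := [SubChoice_isSubComNzRing of Aop p q by <:].




Section UDdef.
Variables (p : nat) (q : int).
Local Notation A := (Aop p q).
Local Notation Zp := (Zloc p).

Definition inAm (m : nat) (a : A) : Prop := forall k : nat, (k < m)%N -> val a k = 0.

Lemma cst_in_Apred (c : Zp) : (fun _ : nat => c) \in Apred p q.
Proof. by apply/asboolP => n; exists c%:P => k _; rewrite map_polyC hornerC. Qed.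

Definition cstA (c : Zp) : A := Sub (fun _ : nat => c) (cst_in_Apred c).

Variable D : lmodType Zp.

Definition zlinear (f : A -> D) : Prop :=
  forall (c : Zp) (t s : A), f (cstA c * t + s) = c *: f t + f s.

(* Hom^cts_{Z_(p)}(A, D): Z_(p)-linear maps whose kernel contains some A_n. *)
Definition ctsHom (f : A -> D) : Prop :=
  zlinear f /\ exists n : nat, forall t : A, inAm n t -> f t = 0.

Definition UDpred : {pred (A -> D)} := fun f => `[< ctsHom f >].

Lemma UDpred_zmod : zmod_closed UDpred.
Proof.
split.
- apply/asboolP; split.
    by move=> c t s; rewrite /= scaler0 addr0.
  by exists 0%N.
- move=> f g /asboolP [lf [n fn]] /asboolP [lg [m gm]]; apply/asboolP.
  have E : forall x, (f - g) x = f x - g x by [].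
  split.
    move=> c t s; rewrite !E lf lg scalerBr.
    by rewrite opprD addrACA.
  exists (maxn n m) => t tA; rewrite E fn ?gm ?subrr // => k km.
  + by apply: tA; apply: (leq_trans km); rewrite leq_maxr.
  + by apply: tA; apply: (leq_trans km); rewrite leq_maxl.
Qed.

HB.instance Definition _ := GRing.isZmodClosed.Build (A -> D) UDpred UDpred_zmod.

Record UD := MkUD { udval : A -> D; _ : udval \in UDpred }.
HB.instance Definition _ := [isSub for udval].
HB.instance Definition _ := [Choice of UD by <:].
HB.instance Definition _ := [SubChoice_isSubZmodule of UD by <:].

Lemma UDact_subproof (a : A) (f : UD) : (fun t : A => val f (t * a)) \in UDpred.
Proof.
case: f => f /= /asboolP [lf [n fn]]; apply/asboolP; split.
  by move=> c t s; rewrite mulrDl -mulrA lf.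
exists n => t tA; apply: fn => k kn.
have -> : val (t * a) k = val t k * val a k by [].
by rewrite tA // mul0r.
Qed.

Definition UDact (a : A) (f : UD) : UD :=
  Sub (fun t : A => val f (t * a)) (UDact_subproof a f).

Lemma UDactA (a b : A) (f : UD) : UDact a (UDact b f) = UDact (a * b) f.
Proof. by apply: val_inj; apply: funext => t /=; rewrite mulrA. Qed.

Lemma UDact1 : left_id 1 UDact.
Proof. by move=> f; apply: val_inj; apply: funext => t /=; rewrite mulr1. Qed.

Lemma UDactDr : right_distributive UDact +%R.
Proof. by move=> a f g; apply: val_inj; apply: funext => t. Qed.

Lemma UDactDl (f : UD) : {morph UDact^~ f : a b / a + b}.
Proof.
move=> a b; apply: val_inj; apply: funext => t /=.
case: f => f /= /asboolP [lf _].
have := lf 1 (t * a) (t * b).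
have -> : cstA 1 = 1 by apply: val_inj.
by rewrite mul1r scale1r mulrDr.
Qed.

HB.instance Definition _ :=
  GRing.Zmodule_isLmodule.Build A UD UDactA UDact1 UDactDr UDactDl.

End UDdef.

Arguments inAm : clear implicits.
Arguments UD : clear implicits.

Definition zp_injective (p : nat) (D : lmodType (Zloc p)) : Prop :=
  forall (M N : lmodType (Zloc p)) (i : {linear M -> N}) (f : {linear M -> D}),
    injective i -> exists g : {linear N -> D}, forall x : M, g (i x) = f x.

Definition discrete (p : nat) (q : int) (M : lmodType (Aop p q)) : Prop :=
  forall x : M, exists n : nat, forall a : Aop p q, inAm p q n a -> a *: x = 0.

Definition discrete_injective (p : nat) (q : int) (I : lmodType (Aop p q)) : Prop :=
  discrete I /\
  forall (M N : lmodType (Aop p q)), discrete M -> discrete N ->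
  forall (i : {linear M -> N}) (f : {linear M -> I}),
    injective i -> exists g : {linear N -> I}, forall x : M, g (i x) = f x.

Definition discrete_enough_injectives (p : nat) (q : int) : Prop :=
  forall M : lmodType (Aop p q), discrete M ->
    exists (I : lmodType (Aop p q)) (j : {linear M -> I}),
      injective j /\ discrete_injective I.

(* Main.v *)
Require Import Defs.
From HB Require Import structures.
From mathcomp Require Import all_boot all_order all_algebra.
From mathcomp Require Import boolp classical_sets functions.
Set Implicit Arguments. Unset Strict Implicit. Unset Printing Implicit Defensive.
Import Order.TTheory GRing.Theory Num.Theory.
Local Open Scope ring_scope.
Local Open Scope classical_set_scope.

Section Baer.
Variables (N E : zmodType).
Implicit Types (G : set (N * E)).

Definition gfun G := forall x a b, G (x,a) -> G (x,b) -> a = b.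
Definition gclos G := forall x a y b, G (x,a) -> G (y,b) -> G (x - y, a - b).
Definition gvalid G := [/\ G (0,0), gfun G & gclos G].

Lemma gv0 G : gvalid G -> G (0,0). Proof. by case. Qed.
Lemma gvfun G : gvalid G -> gfun G. Proof. by case. Qed.
Lemma gvclos G : gvalid G -> gclos G. Proof. by case. Qed.

Lemma gclosN G : gvalid G -> forall x a, G (x,a) -> G (-x, -a).
Proof. by move=> [G0 _ Gc] x a Gxa; have := Gc _ _ _ _ G0 Gxa; rewrite !sub0r. Qed.

Lemma gclosD G : gvalid G -> forall x a y b, G (x,a) -> G (y,b) -> G (x + y, a + b).
Proof.
move=> GV x a y b Gx Gy; have := gvclos GV Gx (gclosN GV Gy).
by rewrite !opprK.
Qed.

Lemma gclosMn G : gvalid G -> forall x a n, G (x,a) -> G (x *+ n, a *+ n).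
Proof.
move=> GV x a n Gx; elim: n => [|n IH]; first by rewrite !mulr0n; apply: gv0.
by rewrite !mulrS; apply: gclosD.
Qed.

Lemma gclosMz G : gvalid G -> forall x a k, G (x,a) -> G (x *~ k, a *~ k).
Proof.
move=> GV x a [] n Gx; first exact: gclosMn.
by rewrite !NegzE !mulrNz; apply: gclosN => //; apply: gclosMn.
Qed.

Lemma e_fin G y n0 e : gvalid G -> (0 < n0)%N -> G (y *+ n0, e *+ n0) ->
  (forall r, (0 < r < n0)%N -> ~ exists a, G (y *+ r, a)) ->
  forall j a, G (y *~ j, a) -> a = e *~ j.
Proof.
move=> GV n0pos Gn0 Hmin j a Gj.
have n0nz : (n0%:Z != 0) by rewrite eqz_nat -lt0n.
set qq := (j %/ n0)%Z; set r := (j %% n0)%Z.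
have r_ge0 : 0 <= r by apply: modz_ge0.
have r_lt : r < n0%:Z by have := ltz_mod j n0nz.
have Gq := gclosMz GV qq Gn0.
have Gr : G (y *~ r, a - (e *+ n0) *~ qq).
  have -> : y *~ r = y *~ j - (y *+ n0) *~ qq.
    have Hj : y *~ j = (y *+ n0) *~ qq + y *~ r.
      by rewrite pmulrn -mulrzA -mulrzDr [n0%:Z * _]mulrC -divz_eq.
    by rewrite Hj addrAC subrr add0r.
  exact: (gvclos GV Gj Gq).
have Hdiv : j = qq * n0 + r := divz_eq j n0.
clearbody qq r.
move: r_ge0 r_lt Gr; case: r Hdiv => // r' Hdiv _ r_lt Gr.
case: r' Hdiv r_lt Gr => [|r'] Hdiv r_lt Gr.
  have Gq' : G (y *~ j, (e *+ n0) *~ qq) by rewrite Hdiv addr0 mulrC mulrzA -pmulrn.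
  by rewrite (gvfun GV Gj Gq') Hdiv addr0 mulrC mulrzA -pmulrn.
exfalso; apply: (Hmin r'.+1); last by exists (a - e *+ n0 *~ qq).
by rewrite ltz_nat in r_lt.
Qed.

Lemma e_inf G y e : gvalid G ->
  (forall n, (0 < n)%N -> ~ exists a, G (y *+ n, a)) ->
  forall j a, G (y *~ j, a) -> a = e *~ j.
Proof.
move=> GV Hn [[|n]|n] a Gj.
- by rewrite mulr0z; apply: (gvfun GV (x:=0)) => //; apply: gv0.
- by exfalso; apply: (Hn n.+1) => //; exists a.
- exfalso; apply: (Hn n.+1) => //; exists (- a).
  by have := gclosN GV Gj; rewrite NegzE mulrNz opprK.
Qed.

Definition gext G y e : set (N * E) :=
  [set xa | exists x a k, G (x,a) /\ xa = (x + y *~ k, a + e *~ k)].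

Lemma gext_sub G y e : G `<=` gext G y e.
Proof. by move=> [x a] Gx; exists x, a, 0; rewrite !mulr0z !addr0. Qed.

Lemma gext_y G y e : gvalid G -> gext G y e (y, e).
Proof. by move=> GV; exists 0, 0, 1; rewrite !mulr1z !add0r; split => //; apply: gv0. Qed.

Lemma gext_valid G y e : gvalid G ->
  (forall j a, G (y *~ j, a) -> a = e *~ j) -> gvalid (gext G y e).
Proof.
move=> GV He; split.
- exact: gext_sub (gv0 GV).
- move=> z b c [x [a [k [Gx [-> ->]]]]] [x' [a' [k' [Gx' [Ez ->]]]]].
  have Ex : x - x' = y *~ (k' - k).
    have -> : x = x' + y *~ k' - y *~ k by rewrite -Ez addrK.
    by rewrite mulrzBr addrAC [x' + _]addrC addrK.
  have := gvclos GV Gx Gx'; rewrite Ex => /He; rewrite mulrzBr => H.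
  have -> : a = (a - a') + a' by rewrite subrK.
  by rewrite H addrAC subrK addrC.
- move=> z b z' b' [x [a [k [Gx [-> ->]]]]] [x' [a' [k' [Gx' [-> ->]]]]].
  exists (x - x'), (a - a'), (k - k'); split; first exact: (gvclos GV Gx Gx').
  by rewrite !mulrzBr !opprD; congr (_, _); rewrite addrACA.
Qed.

Definition divisibleZ (V : zmodType) :=
  forall (n : nat) (d : V), (0 < n)%N -> exists e, e *+ n = d.

Lemma baer (Ediv : divisibleZ E) G0 : gvalid G0 ->
  exists g : N -> E, (forall x y, g (x - y) = g x - g y) /\
                     (forall x a, G0 (x,a) -> g x = a).
Proof.
move=> GV0.
pose P := fun A : set (N * E) => gvalid (G0 `|` A).
have [A [PA Amax]] : exists A, P A /\ forall B, A `<` B -> ~ P B.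
  apply: Zorn_bigcup => F FP Ftot.
  set U := G0 `|` \bigcup_(X in F) X.
  have HX : forall X, F X -> G0 `|` X `<=` U.
    by move=> X FX w [G0w|Xw]; [left|right; exists X].
  have common : forall u v, U u -> U v ->
      exists H, [/\ gvalid H, H `<=` U, H u & H v].
    move=> u v Uu Uv.
    case: Uu => [G0u|[X FX Xu]]; case: Uv => [G0v|[Y FY Yv]].
    - by exists G0; split => // w; left.
    - exists (G0 `|` Y); split; [exact: FP | exact: HX | by left | by right].
    - exists (G0 `|` X); split; [exact: FP | exact: HX | by right | by left].
    - case: (Ftot X Y FX FY) => [XY|YX].
      + exists (G0 `|` Y); split; [exact: FP | exact: HX | right; exact: XY | by right].
      + exists (G0 `|` X); split; [exact: FP | exact: HX | by right | right; exact: YX].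
  split.
  - by left; apply: gv0.
  - move=> x a b Ua Ub; have [H [HV _ Ha Hb]] := common _ _ Ua Ub.
    exact: (gvfun HV Ha Hb).
  - move=> x a y b Ua Ub; have [H [HV HU Ha Hb]] := common _ _ Ua Ub.
    exact/HU/(gvclos HV Ha Hb).
pose G := G0 `|` A.
have GV : gvalid G := PA.
have tot : forall y, exists a, G (y, a).
  move=> y; apply: contrapT => Hy.
  have [e He] : exists e, forall j a, G (y *~ j, a) -> a = e *~ j.
    case: (pselect (exists n, (0 < n)%N /\ exists a, G (y *+ n, a)))=> [Hex|Hno].
    + pose Pn := fun n => `[< (0 < n)%N /\ exists a, G (y *+ n, a) >].
      have exP : exists n, Pn n by case: Hex => n Hn; exists n; apply/asboolP.
      case: (@ex_minnP Pn exP) => n0 Pn0 n0min.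
      move: Pn0; rewrite /Pn => /asboolP [n0pos [d Gd]].
      have [e Ee] := Ediv n0 d n0pos.
      exists e; apply: (e_fin GV n0pos); first by rewrite Ee.
      move=> r /andP [r0 rn0] Hr.
      have : Pn r by rewrite /Pn; apply/asboolP.
      by move/n0min; rewrite leqNgt rn0.
    + by exists 0; apply: e_inf => // n n0 Hn; apply: Hno; exists n; split.
  have BV := gext_valid GV He.
  apply: (Amax (gext G y e)).
  - split; first by move=> w Aw; apply: gext_sub; right.
    move=> BA; apply: Hy; exists e; right; exact: (BA _ (gext_y y e GV)).
  - rewrite /P setUidr; first exact: BV.
    by move=> w G0w; apply: gext_sub; left.
pose g x := projT1 (cid (tot x)).
have Gg : forall x, G (x, g x) := fun x => projT2 (cid (tot x)).
exists g; split.
- move=> x y; apply: (gvfun GV (Gg _)); exact: (gvclos GV (Gg x) (Gg y)).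
- move=> x a G0x; exact: (gvfun GV (Gg x) (or_introl G0x)).
Qed.

End Baer.

Definition fr (x : rat) : rat := x - (Num.floor x)%:~R.

Lemma fr_ge0 x : 0 <= fr x.
Proof. by rewrite subr_ge0 floor_le. Qed.

Lemma fr_lt1 x : fr x < 1.
Proof. by rewrite ltrBlDr addrC -[1]/(1%:~R) -intrD floorD1_gt. Qed.

Lemma fr_id x : 0 <= x < 1 -> fr x = x.
Proof.
by move=> Hx; rewrite /fr (@floor_def _ x 0) ?subr0.
Qed.

Lemma frDz x (k : int) : fr (x + k%:~R) = fr x.
Proof.
rewrite /fr floorDrz ?intr_int // intrKfloor intrD.
by rewrite opprD addrACA subrr addr0.
Qed.

Lemma frD x y : fr (fr x + y) = fr (x + y).
Proof.
have -> : fr x + y = (x + y) + (- Num.floor x)%:~R by rewrite /fr addrAC intrN.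
exact: frDz.
Qed.

Lemma frP x : (0 <= fr x) && (fr x < 1).
Proof. by rewrite fr_ge0 fr_lt1. Qed.

Record QZ := MkQZ { qzv : rat; _ : (0 <= qzv) && (qzv < 1) }.
HB.instance Definition _ := [isSub for qzv].
HB.instance Definition _ := [Choice of QZ by <:].

Definition qzof (x : rat) : QZ := MkQZ (frP x).
Definition qz0 : QZ := qzof 0.
Definition qzadd (a b : QZ) : QZ := qzof (qzv a + qzv b).
Definition qzopp (a : QZ) : QZ := qzof (- qzv a).

Lemma qzofK (a : QZ) : qzof (qzv a) = a.
Proof. by apply: val_inj; rewrite /= fr_id //; case: a. Qed.

Lemma fr0 : fr 0 = 0. Proof. by rewrite fr_id // lexx ltr01. Qed.

Lemma qz_addA : associative qzadd.
Proof.
move=> a b c; apply: val_inj => /=.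
by rewrite frD [qzv a + fr _]addrC frD addrC addrA.
Qed.

Lemma qz_addC : commutative qzadd.
Proof. by move=> a b; apply: val_inj => /=; rewrite addrC. Qed.

Lemma qz_add0 : left_id qz0 qzadd.
Proof. by move=> a; rewrite /qzadd /= fr0 add0r qzofK. Qed.

Lemma qz_addN : left_inverse qz0 qzopp qzadd.
Proof. by move=> a; apply: val_inj => /=; rewrite frD addNr. Qed.

HB.instance Definition _ := GRing.isZmodule.Build QZ qz_addA qz_addC qz_add0 qz_addN.

Lemma qzvD (a b : QZ) : qzv (a + b) = fr (qzv a + qzv b). Proof. by []. Qed.

Lemma qzvMn (a : QZ) n : qzv (a *+ n) = fr (qzv a *+ n).
Proof.
elim: n => [|n IH]; first by rewrite !mulr0n fr0.
by rewrite !mulrS qzvD IH [qzv a + fr _]addrC frD addrC.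
Qed.

Lemma frMn z n : fr (fr z *+ n) = fr (z *+ n).
Proof.
elim: n => [|n IH]; first by rewrite !mulr0n.
by rewrite !mulrS frD [z + _]addrC -frD IH frD addrC.
Qed.

Lemma qz_div : divisibleZ QZ.
Proof.
move=> n d n0; exists (qzof (qzv d / n%:R)); apply: val_inj => /=.
rewrite qzvMn /= frMn.
rewrite -[X in fr X]mulr_natr divfK ?pnatr_eq0 -?lt0n // fr_id //.
by case: d.
Qed.

Lemma qz_elem (n : nat) : (1 < n)%N -> exists e : QZ, e != 0 /\ e *+ n = 0.
Proof.
move=> n1; exists (qzof (n%:R^-1)).
have npos : (0 : rat) < n%:R by rewrite ltr0n; apply: ltnW.
have Hv : qzv (qzof n%:R^-1) = n%:R^-1.
  by rewrite /= fr_id // invr_ge0 ltW //= invf_lt1 // ltr1n.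
split.
- apply/eqP => /(congr1 qzv); rewrite Hv /= fr0 => /eqP.
  by rewrite invr_eq0 pnatr_eq0 => /eqP n0; move: n1; rewrite n0.
- apply: val_inj => /=; rewrite qzvMn Hv -[X in fr X]mulr_natr mulVf ?gt_eqF //.
Qed.

Lemma separate (M : zmodType) (m : M) : m != 0 ->
  exists g : M -> QZ, (forall x y, g (x - y) = g x - g y) /\ g m != 0.
Proof.
move=> m0.
pose G : set (M * QZ) := [set xa | xa = (0, 0)].
have GV : gvalid G.
  split; first by [].
  - by move=> x a b [_ ->] [_ ->].
  - by move=> x a y b [-> ->] [-> ->]; rewrite /G /= !subr0.
have [e [e0 He]] : exists e : QZ, e != 0 /\ forall j a, G (m *~ j, a) -> a = e *~ j.
  case: (pselect (exists n, (0 < n)%N /\ exists a, G (m *+ n, a))) => [Hex|Hno].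
  - pose Pn := fun n => `[< (0 < n)%N /\ exists a, G (m *+ n, a) >].
    have exP : exists n, Pn n by case: Hex => n Hn; exists n; apply/asboolP.
    case: (@ex_minnP Pn exP) => n0 Pn0 n0min.
    move: Pn0; rewrite /Pn => /asboolP [n0pos [d Gd]].
    have n0gt1 : (1 < n0)%N.
      case: n0 n0pos Gd {n0min} => [|[|n]] // _ [m0' _].
      by move: m0; rewrite -m0' mulr1n eqxx.
    have [e [e0 en]] := qz_elem n0gt1.
    exists e; split => //; apply: (e_fin GV n0pos).
      by rewrite en; case: Gd => -> _.
    move=> r /andP [r0 rn0] Hr.
    have : Pn r by rewrite /Pn; apply/asboolP.
    by move/n0min; rewrite leqNgt rn0.
  - have [e [e0 _]] := qz_elem (isT : (1 < 2)%N).
    exists e; split => //; apply: e_inf => // n n0 Hn; apply: Hno; by exists n.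
have BV := gext_valid GV He.
have [g [gadd gB]] := baer qz_div BV.
by exists g; split => //; rewrite (gB _ _ (gext_y m e GV)).
Qed.

Definition mkLin (R : pzRingType) (U V : lmodType R) (f : U -> V) (H : linear f) : {linear U -> V} :=
  HB.pack f (GRing.isLinear.Build R U V *:%R f H).
Arguments mkLin {R U V f}.

Lemma addf0 (U V : zmodType) (h : U -> V) :
  (forall r s, h (r - s) = h r - h s) -> h 0 = 0.
Proof. by move=> H; rewrite -(subrr 0) H subrr. Qed.

Lemma addfD (U V : zmodType) (h : U -> V) :
  (forall r s, h (r - s) = h r - h s) -> forall r s, h (r + s) = h r + h s.
Proof.
move=> H r s.
have Hn : h (- s) = - h s by rewrite -sub0r H (addf0 H) sub0r.
by rewrite -{1}(opprK s) H Hn opprK.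
Qed.

Section HZdef.
Variables (p : nat) (E : zmodType).
Local Notation Zp := (Zloc p).

Definition addf (h : Zp -> E) := forall r s, h (r - s) = h r - h s.
Definition HZpred : {pred (Zp -> E)} := fun h => `[< addf h >].

Lemma HZ_zmod : zmod_closed HZpred.
Proof.
split.
- by apply/asboolP => r s; rewrite subr0.
- move=> f g /asboolP Hf /asboolP Hg; apply/asboolP => r s.
  have E1 : forall x, (f - g) x = f x - g x by [].
  rewrite !E1 Hf Hg !opprB [LHS]addrACA [RHS]addrACA.
  by rewrite [- f s + _]addrC.
Qed.

HB.instance Definition _ := GRing.isZmodClosed.Build (Zp -> E) HZpred HZ_zmod.

Record HZ := MkHZ { hzv : Zp -> E; _ : hzv \in HZpred }.
HB.instance Definition _ := [isSub for hzv].
HB.instance Definition _ := [Choice of HZ by <:].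
HB.instance Definition _ := [SubChoice_isSubZmodule of HZ by <:].

Lemma hzv_add (h : HZ) : addf (hzv h).
Proof. by case: h => h /= /asboolP. Qed.

Lemma hzs_subproof (c : Zp) (h : HZ) : (fun r : Zp => hzv h (r * c)) \in HZpred.
Proof. by apply/asboolP => r s /=; rewrite mulrBl hzv_add. Qed.

Definition hzs (c : Zp) (h : HZ) : HZ := Sub (fun r : Zp => hzv h (r * c)) (hzs_subproof c h).

Lemma hzsA a b (h : HZ) : hzs a (hzs b h) = hzs (a * b) h.
Proof. by apply: val_inj; apply: funext => r /=; rewrite mulrA. Qed.

Lemma hzs1 : left_id 1 hzs.
Proof. by move=> h; apply: val_inj; apply: funext => r /=; rewrite mulr1. Qed.

Lemma hzsDr : right_distributive hzs +%R.
Proof. by move=> a f g; apply: val_inj; apply: funext => r. Qed.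

Lemma hzsDl (h : HZ) : {morph hzs^~ h : a b / a + b}.
Proof.
move=> a b; apply: val_inj; apply: funext => r /=.
by rewrite mulrDr (addfD (hzv_add h)).
Qed.

HB.instance Definition _ := GRing.Zmodule_isLmodule.Build Zp HZ hzsA hzs1 hzsDr hzsDl.

Lemma hzvE (h : HZ) (c r : Zp) : hzv (c *: h) r = hzv h (r * c).
Proof. by []. Qed.

End HZdef.

Lemma hzv0 p (E : zmodType) r : hzv (0 : HZ p E) r = 0. Proof. by []. Qed.
Lemma hzvB p (E : zmodType) (h k : HZ p E) r : hzv (h - k) r = hzv h r - hzv k r.
Proof. by []. Qed.

Lemma HZ_inj p (E : zmodType) (Ediv : divisibleZ E) : zp_injective (HZ p E).
Proof.
move=> M N i f iinj.
pose G0 : set (N * E) := [set xa | exists x, xa = (i x, hzv (f x) 1)].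
have GV : gvalid G0.
  split.
  - by exists 0; rewrite !linear0.
  - move=> x a b [y [Ex ->]] [y' [Ex' ->]].
    by have -> : y = y' by apply: iinj; rewrite -Ex -Ex'.
  - move=> x a y b [u [-> ->]] [v [-> ->]].
    by exists (u - v); rewrite !linearB hzvB.
have [g' [g'add g'G]] := baer Ediv GV.
have gP : forall n : N, (fun r : Zloc p => g' (r *: n)) \in @HZpred p E.
  by move=> n; apply/asboolP => r s /=; rewrite scalerBl g'add.
pose gf (n : N) : HZ p E := Sub (fun r : Zloc p => g' (r *: n)) (gP n).
have gl : linear gf.
  move=> c n n'; apply: val_inj; apply: funext => r /=.
  by rewrite scalerDr scalerA (addfD g'add).
exists (mkLin gl) => x; apply: val_inj; apply: funext => r /=.
rewrite -linearZ /= (g'G _ (hzv (f (r *: x)) 1)); last by exists (r *: x).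
by rewrite linearZ /= mul1r.
Qed.

Lemma fun_div (T : Type) (E : zmodType) : divisibleZ E -> divisibleZ (T -> E).
Proof.
move=> Ediv n d n0.
pose e x := projT1 (cid (Ediv n (d x) n0)).
exists e; apply: funext => x.
have mE : forall (g : T -> E) k, (g *+ k) x = g x *+ k.
  by move=> g; elim=> [|k IH] //; rewrite !mulrS -IH.
rewrite mE.
exact: projT2 (cid (Ediv n (d x) n0)).
Qed.

Lemma embed_HZ p (V : lmodType (Zloc p)) :
  exists e : {linear V -> HZ p (V -> QZ)}, injective e.
Proof.
have Hs : forall m : V, exists g : V -> QZ,
    (forall x y, g (x - y) = g x - g y) /\ (m != 0 -> g m != 0).
  move=> m; case: (eqVneq m 0) => [->|m0].
  - by exists (fun _ => 0); split => // x y; rewrite subr0.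
  - by have [g [ga gm]] := separate m0; exists g.
pose psi m := projT1 (cid (Hs m)).
have psiP : forall m, (forall x y, psi m (x - y) = psi m x - psi m y) /\
                      (m != 0 -> psi m m != 0).
  by move=> m; exact: projT2 (cid (Hs m)).
pose Psi (x : V) : V -> QZ := fun m => psi m x.
have eP : forall x : V, (fun r : Zloc p => Psi (r *: x)) \in @HZpred p (V -> QZ).
  move=> x; apply/asboolP => r s; apply: funext => m /=.
  by rewrite /Psi scalerBl (psiP m).1.
pose ef (x : V) : HZ p (V -> QZ) := Sub (fun r : Zloc p => Psi (r *: x)) (eP x).
have el : linear ef.
  move=> c x y; apply: val_inj; apply: funext => r; apply: funext => m /=.
  by rewrite /Psi scalerDr scalerA (addfD (psiP m).1).
exists (mkLin el) => x y Exy.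
apply/eqP; rewrite -subr_eq0; apply/negP => nz.
have := (psiP (x - y)).2 (introN idP nz); apply/negP; rewrite negbK.
have := congr1 (fun h : HZ p (V -> QZ) => hzv h 1 (x - y)) Exy => /=.
by rewrite /Psi !scale1r => H; rewrite (psiP (x-y)).1 H subrr.
Qed.

Lemma cstA_mul p q (a b : Zloc p) : cstA q (a * b) = cstA q a * cstA q b.
Proof. by apply: val_inj. Qed.
Lemma cstA_add p q (a b : Zloc p) : cstA q (a + b) = cstA q a + cstA q b.
Proof. by apply: val_inj. Qed.
Lemma cstA_1 p q : cstA q (1 : Zloc p) = 1.
Proof. by apply: val_inj. Qed.

Section Res.
Variables (p : nat) (q : int) (V : lmodType (Aop p q)).
Definition resA : Type := V.
HB.instance Definition _ := GRing.Zmodule.on resA.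
Definition rs (c : Zloc p) (v : resA) : resA := (cstA q c) *: (v : V).
Lemma rsA a b (v : resA) : rs a (rs b v) = rs (a * b) v.
Proof. by rewrite /rs scalerA cstA_mul. Qed.
Lemma rs1 : left_id 1 rs.
Proof. by move=> v; rewrite /rs cstA_1 scale1r. Qed.
Lemma rsDr : right_distributive rs +%R.
Proof. by move=> a u v; rewrite /rs scalerDr. Qed.
Lemma rsDl (v : resA) : {morph rs^~ v : a b / a + b}.
Proof. by move=> a b; rewrite /rs cstA_add scalerDl. Qed.
HB.instance Definition _ := GRing.Zmodule_isLmodule.Build (Zloc p) resA rsA rs1 rsDr rsDl.
End Res.

Lemma UD0 p q (D : lmodType (Zloc p)) (u : UD p q D) : val u 0 = 0.
Proof.
case: u => f /= /asboolP [lf _].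
have := lf 1 0 0; rewrite mulr0 addr0 scale1r => /eqP.
by rewrite -subr_eq subrr eq_sym => /eqP.
Qed.

Lemma UDZ p q (D : lmodType (Zloc p)) (u : UD p q D) c t :
  val u (cstA q c * t) = c *: val u t.
Proof.
have := UD0 u; case: u => f /= /asboolP [lf _] f0.
by have := lf c t 0; rewrite !addr0 f0 addr0.
Qed.

Lemma coind p q (D : lmodType (Zloc p)) (N : lmodType (Aop p q)) :
  discrete N -> forall psi : {linear resA N -> D},
  exists g : {linear N -> UD p q D}, forall y t, val (g y) t = psi (t *: y).
Proof.
move=> dN psi.
have gP : forall y : N, (fun t : Aop p q => psi (t *: y)) \in @UDpred p q D.
  move=> y; apply/asboolP; split.
  - move=> c t s /=; rewrite scalerDl -scalerA.
    exact: (linearP psi c (t *: y : resA N) (s *: y : resA N)).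
  - have [n Hn] := dN y; exists n => t tA; rewrite Hn //.
    exact: (linear0 psi).
pose gf (y : N) : UD p q D := Sub (fun t : Aop p q => psi (t *: y)) (gP y).
have gl : linear gf.
  move=> a y z; apply: val_inj; apply: funext => t /=.
  rewrite scalerDr scalerA.
  exact: (linearD psi ((t * a) *: y : resA N) (t *: z : resA N)).
by exists (mkLin gl).
Qed.

Lemma UD_discrete p q (D : lmodType (Zloc p)) : discrete (UD p q D).
Proof.
move=> u; have := u; case: u => f Hf _; have := Hf; move=> /asboolP [lf [n fn]].
exists n => a aA; apply: val_inj; apply: funext => t /=.
apply: fn => k kn.
have -> : val (t * a) k = val t k * val a k by [].
by rewrite aA // mulr0.
Qed.

Lemma UD_disc_inj p q (D : lmodType (Zloc p)) :
  zp_injective D -> discrete_injective (UD p q D).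
Proof.
move=> Dinj; split; first exact: UD_discrete.
move=> M N dM dN i f iinj.
pose phi (x : resA M) : D := val (f x) 1.
have phil : linear phi.
  move=> c x y; rewrite /phi.
  have -> : (c *: x + y : resA M) = (cstA q c *: x + y : M) by [].
  rewrite linearP /=.
  have -> : forall (F G : Aop p q -> D) t, (F + G) t = F t + G t by [].
  by rewrite /= mul1r -[cstA q c]mulr1 (UDZ (f x)).
have il : linear (i : resA M -> resA N).
  by move=> c x y; exact: (linearP i (cstA q c) x y).
have [psi Hpsi] := Dinj (resA M) (resA N) (mkLin il) (mkLin phil) iinj.
have [g Hg] := coind dN psi.
exists g => x; apply: val_inj; apply: funext => t; rewrite Hg.
have -> : (t *: i x) = i (t *: x) by rewrite linearZ.
have := Hpsi (t *: x); rewrite /= => ->; rewrite /phi linearZ /=.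
by rewrite mul1r.
Qed.

Theorem corollary5p6 (p : nat) (q : int)
  (p_prime : prime p) (p_odd : odd p) (q_prim : primitive_mod q (p ^ 2))
  (D : lmodType (Zloc p)) (D_inj : zp_injective D) :
  discrete_injective (UD p q D) /\ discrete_enough_injectives p q.
Proof.
split; first exact: UD_disc_inj.
move=> M dM.
have [e einj] := embed_HZ (resA M).
have D0inj : zp_injective (HZ p (resA M -> QZ)) := HZ_inj (@fun_div (resA M) QZ qz_div).
have [j Hj] := coind dM e.
exists (UD p q (HZ p (resA M -> QZ))), j; split; last exact: UD_disc_inj.
move=> x y Exy; have := congr1 (fun u => val u 1) Exy; rewrite /= !Hj !scale1r.
exact: einj.
Qed.
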